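(* Let $X$ be a finite $T_0$ topological space. Then $\Psi(x,y)=|U_y\setminus U_x|$ for all $x,y\in X$.
   Context: For a finite topological space $X$ and $x\in X$, $U_x$ denotes the minimal open set containing $x$ (the intersection of all open sets containing $x$). A nested sequence of open sets around $x$ is a finite sequence $U_0\subsetneq U_1\subsetneq\cdots\subsetneq U_m=X$ of open sets with $U_0=U_x$ such that for each $j$ there is no open set $V$ with $U_j\subsetneq V\subsetneq U_{j+1}$. The furtherness function $\Psi:X\times X\to\{0,1,\dots,|X|-1\}$ is defined by: $\Psi(x,y)$ is the smallest integer $k\ge 0$ such that there exists a nested sequence $(U_j)_{j\ge0}$ of open sets around $x$ with $y\in U_k$. *)

(* Defs.v *)
From mathcomp Require Import all_boot.
Set Implicit Arguments. Unset Strict Implicit. Unset Printing Implicit Defensive.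

Section FiniteTop.
Variable T : finType.

(* op is a topology on T (for a finite space, closure under finite unions is
   closure under arbitrary unions). *)
Definition is_topology (op : {set {set T}}) : Prop :=
  [/\ set0 \in op, setT \in op,
      (forall A B, A \in op -> B \in op -> A :|: B \in op) &
      (forall A B, A \in op -> B \in op -> A :&: B \in op)].

Definition is_T0 (op : {set {set T}}) : Prop :=
  forall x y : T, x != y -> exists2 A, A \in op & (x \in A) != (y \in A).

Definition minopen (op : {set {set T}}) (x : T) : {set T} :=
  \bigcap_(A in op | x \in A) A.

Definition open_cover (op : {set {set T}}) (A B : {set T}) : bool :=
  (A \proper B) && [forall V in op, ~~ ((A \proper V) && (V \proper B))].

Definition nested_seq (op : {set {set T}}) (x : T) (s : seq {set T}) : bool :=
  [&& s != [::], all (fun A => A \in op) s,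
      head set0 s == minopen op x, last set0 s == setT &
      sorted (open_cover op) s].

(* Psi(x,y) = k : k is the least index such that some nested sequence around x
   has y in its k-th member. *)
Definition furtherness_is (op : {set {set T}}) (x y : T) (k : nat) : Prop :=
  (exists s, [/\ nested_seq op x s, k < size s & y \in nth set0 s k]) /\
  (forall s k', nested_seq op x s -> k' < size s -> y \in nth set0 s k' -> k <= k').

End FiniteTop.

(* Main.v *)
Require Import Defs.
From mathcomp Require Import all_boot.
From mathcomp Require Import zify.
Set Implicit Arguments. Unset Strict Implicit. Unset Printing Implicit Defensive.

Lemma minopen_open (T : finType) (op : {set {set T}}) x :
  is_topology op -> minopen op x \in op.
Proof.
case=> _ HT _ HI; rewrite /minopen.
by apply: (big_ind (fun S => S \in op)) => // i /andP[].
Qed.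

Lemma minopen_in (T : finType) (op : {set {set T}}) x : x \in minopen op x.
Proof. by apply/bigcapP => A /andP[]. Qed.

Lemma minopen_sub (T : finType) (op : {set {set T}}) x A :
  A \in op -> x \in A -> minopen op x \subset A.
Proof. by move=> HA HxA; apply/subsetP => y /bigcapP; apply; rewrite HA. Qed.

Lemma minimal_add (T : finType) (op : {set {set T}}) A B :
  is_topology op -> is_T0 op -> A \in op -> B \in op -> B :\: A != set0 ->
  exists b, [/\ b \in B, b \notin A & b |: A \in op].
Proof.
move=> Htop HT0 HA HB /set0Pn[b0 Hb0].
case: (arg_minnP (fun b => #|minopen op b|) Hb0) => b.
move=> /setDP[HbB HbA] Hmin.
exists b; split => //.
have Hmb := minopen_open b Htop.
have Hsub : minopen op b \subset b |: A.
  apply/subsetP => c Hc; rewrite !inE.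
  case: (eqVneq c b) => //= Hcb.
  apply/negPn/negP => HcA.
  have HcB : c \in B by apply: (subsetP (minopen_sub HB HbB)).
  have Hle : #|minopen op b| <= #|minopen op c| by apply: Hmin; apply/setDP.
  have [V HV] := HT0 c b Hcb.
  case HcV: (c \in V); case HbV: (b \in V) => // _.
  - have H1 : minopen op c \subset minopen op b by apply: minopen_sub.
    have H2 : b \notin minopen op c.
      by apply/negP => /(subsetP (minopen_sub HV HcV)); rewrite HbV.
    have : minopen op c \proper minopen op b.
      by apply/properP; split => //; exists b => //; apply: minopen_in.
    by move/proper_card; rewrite ltnNge Hle.
  - by move: (subsetP (minopen_sub HV HbV) c Hc); rewrite HcV.
have -> : b |: A = A :|: minopen op b.
  apply/eqP; rewrite eqEsubset; apply/andP; split.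
  - by apply/subsetP => c; rewrite !inE => /orP[/eqP->|->]; rewrite ?minopen_in ?orbT.
  - by rewrite subUset Hsub subsetUr.
by case: Htop => _ _ HU _; apply: HU.
Qed.

Lemma cover_card (T : finType) (op : {set {set T}}) A B :
  is_topology op -> is_T0 op -> A \in op -> B \in op -> open_cover op A B ->
  A \subset B /\ #|B| = #|A|.+1.
Proof.
move=> Htop HT0 HA HB /andP[HAB /forallP Hno].
have HAB' := HAB; move/properP: HAB' => [Hs [b0 Hb0B Hb0A]].
have Hne : B :\: A != set0 by apply/set0Pn; exists b0; apply/setDP.
have [b [HbB HbA Hop]] := minimal_add Htop HT0 HA HB Hne.
split => //.
have HAV : A \proper b |: A by rewrite properEcard subsetUr cardsU1 HbA add1n ltnSn.
have HVB : b |: A \subset B by rewrite subUset sub1set HbB.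
have := Hno (b |: A); rewrite Hop HAV /= => HnVB.
have -> : B = b |: A.
  apply/eqP; rewrite eqEsubset HVB andbT.
  by move: HnVB; rewrite properE HVB /= negbK.
by rewrite cardsU1 HbA.
Qed.

Lemma chain_card (T : finType) (op : {set {set T}}) d :
  is_topology op -> is_T0 op -> forall s a, a \in op ->
  all (fun A => A \in op) s -> path (open_cover op) a s ->
  forall k, k <= size s -> a \subset nth d (a :: s) k /\ #|nth d (a :: s) k| = #|a| + k.
Proof.
move=> Htop HT0; elim=> [|b s IH] a Ha.
  by move=> _ _ [|k] //= _; rewrite addn0.
move=> /= /andP[Hb Hs] /andP[Hab Hp] [|k] Hk /=; first by rewrite addn0.
have [H1 H2] := cover_card Htop HT0 Ha Hb Hab.
have [H3 H4] := IH b Hb Hs Hp k Hk.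
split; first exact: subset_trans H1 H3.
by rewrite H4 H2 addSnnS.
Qed.

Lemma chain_exists (T : finType) (op : {set {set T}}) :
  is_topology op -> is_T0 op -> forall n A B, A \in op -> B \in op ->
  A \subset B -> #|B :\: A| = n ->
  exists s, [/\ path (open_cover op) A s, all (fun A => A \in op) s,
               last A s = B & size s = n].
Proof.
move=> Htop HT0; elim=> [|n IH] A B HA HB HAB Hn.
  exists [::]; split => //=.
  move/cards0_eq/eqP: Hn; rewrite setD_eq0 => HBA.
  by apply/eqP; rewrite eqEsubset HAB HBA.
have Hne : B :\: A != set0 by apply/eqP => H; rewrite H cards0 in Hn.
have [b [HbB HbA Hop]] := minimal_add Htop HT0 HA HB Hne.
have HVB : b |: A \subset B by rewrite subUset sub1set HbB.
have Hc : #|b |: A| = #|A|.+1 by rewrite cardsU1 HbA.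
have Hn' : #|B :\: (b |: A)| = n.
  move: Hn; rewrite !cardsDS // Hc.
  have := subset_leq_card HVB; lia.
have [s [Hp Hall Hl Hsz]] := IH _ _ Hop HB HVB Hn'.
exists (b |: A :: s); split => //=; last by rewrite Hsz.
- rewrite Hp andbT /open_cover properEcard subsetUr Hc ltnSn /=.
  apply/forallP => V; apply/implyP => _; apply/negP => /andP[/proper_card H1 /proper_card H2].
  lia.
- by rewrite Hop.
Qed.

Lemma nth_size_last (T : Type) (d a : T) s : nth d (a :: s) (size s) = last a s.
Proof. by elim: s a => [|b s IH] a //=. Qed.

Theorem corollary2p14 (T : finType) (op : {set {set T}}) :
  is_topology op -> is_T0 op ->
  forall x y : T, furtherness_is op x y #|minopen op y :\: minopen op x|.
Proof.
move=> Htop HT0 x y.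
have Hx := minopen_open x Htop.
have Hy := minopen_open y Htop.
split.
- set W := minopen op x :|: minopen op y.
  have HW : W \in op by case: Htop => _ _ HU _; apply: HU.
  have [s1 [Hp1 Ha1 Hl1 Hs1]] := chain_exists Htop HT0 Hx HW (subsetUl _ _)
       (erefl #|W :\: minopen op x|).
  have HT : setT \in op by case: Htop.
  have [s2 [Hp2 Ha2 Hl2 _]] := chain_exists Htop HT0 HW HT (subsetT _)
       (erefl #|setT :\: W|).
  exists (minopen op x :: s1 ++ s2); split.
  + rewrite /nested_seq /= Hx all_cat Ha1 Ha2 last_cat Hl1 Hl2 cat_path Hp1 Hl1 Hp2.
    by rewrite !eqxx.
  + rewrite /W setDUl setDv set0U in Hs1.
    by rewrite -Hs1 /= size_cat ltnS leq_addr.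
  + rewrite /W setDUl setDv set0U in Hs1.
    rewrite -Hs1 -cat_cons nth_cat /= ltnSn nth_size_last Hl1 /W.
    by rewrite inE minopen_in orbT.
- move=> s k Hs Hk Hy'.
  case/and5P: Hs; case: s Hk Hy' => [|a s] //= Hk Hy' _ /andP[Ha Hall] /eqP Hh _ Hp.
  subst a.
  have [H1 H2] := chain_card set0 Htop HT0 Hx Hall Hp Hk.
  set U := nth set0 (minopen op x :: s) k in H1 H2 Hy'.
  have HU : U \in op.
    rewrite /U; case: k Hk {H1 H2 Hy' U} => [|k] Hk //=.
    by apply: (allP Hall); apply: mem_nth.
  have Hsub : minopen op y :\: minopen op x \subset U :\: minopen op x.
    by apply: setSD; apply: minopen_sub.
  have := subset_leq_card Hsub; rewrite (cardsDS H1) H2; lia.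
Qed.
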